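(* If $\mathcal{F}$ is a strong regular facets-pairing structure on $\mathcal{C}^n$, then for every proper face $f$ of $\mathcal{C}^n$ the number of faces in the face family $\widehat f$ is a power of $2$.
   Context: Let $[\pm n]=\{\pm1,\dots,\pm n\}$ and $\mathcal{C}^n=\{x\in\mathbb{R}^n: -\tfrac14\le x_i\le\tfrac14\}$. For $1\le i\le n$, $\mathbf{F}(i)$ and $\mathbf{F}(-i)$ denote the facets of $\mathcal{C}^n$ in $\{x_i=\tfrac14\}$ and $\{x_i=-\tfrac14\}$; for $j_1,\dots,j_s\in[\pm n]$ with distinct absolute values, $\mathbf{F}(j_1,\dots,j_s)=\bigcap_i\mathbf{F}(j_i)$ (every proper face has this form). A signed permutation is a bijection $\sigma$ of $[\pm n]$ with $\sigma(-k)=-\sigma(k)$. A facets-pairing structure on $\mathcal{C}^n$ is a pair $(\omega,\{\tau_j\})$ where $\omega$ is a bijection of $[\pm n]$ with $\omega\circ\omega=\mathrm{id}$ and $\tau_j:\mathbf{F}(j)\to\mathbf{F}(\omega(j))$ are face-preserving homeomorphisms with $\tau_{\omega(j)}=\tau_j^{-1}$, such that for all $|j|\ne|k|$, writing $\tau_j(\mathbf{F}(j,k))=\mathbf{F}(\omega(j),k')$ and $\tau_k(\mathbf{F}(j,k))=\mathbf{F}(j',\omega(k))$, one has $\tau_{k'}\tau_j(p)=\tau_{j'}\tau_k(p)$ for all $p\in\mathbf{F}(j,k)$. It is regular if each $\tau_j$ is a Euclidean isometry and $\omega$ is a signed permutation. A composition $\tau_{k_m}\circ\dots\circ\tau_{k_1}$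 applied to a proper face $f$ is valid if $f\subset\mathbf{F}(k_1)$ and $\tau_{k_i}\circ\dots\circ\tau_{k_1}(f)\subset\mathbf{F}(k_{i+1})$ for $1\le i<m$ ($m=0$ allowed). The face family $\widehat f$ is the set of faces $\tau_{k_m}\circ\dots\circ\tau_{k_1}(f)$ over all valid compositions. For a proper face $f$ let $\Xi(f)$ be the set of facets containing $f$. If $f\subset\mathbf{F}(k)$ and $f'=\tau_k(f)$, define $\Psi^f_k:\Xi(f)\to\Xi(f')$ by $\Psi^f_k(\mathbf{F}(k))=\mathbf{F}(\omega(k))$ and, for $F'\in\Xi(f)\setminus\{\mathbf{F}(k)\}$, $\Psi^f_k(F')$ is the facet $G$ with $G\cap\mathbf{F}(\omega(k))=\tau_k(F'\cap\mathbf{F}(k))$. $\mathcal{F}$ is strong if for every proper face $f$ and any two valid compositions mapping $f$ onto the same face $\widetilde f$: (a) they agree at every point of $f$; and (b) the corresponding composites of the maps $\Psi$ along the two compositions coincide as maps $\Xi(f)\to\Xi(\widetilde f)$. *)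

(* Defs.v *)
From Stdlib Require Import Reals.
From mathcomp Require Import all_boot.
Set Implicit Arguments. Unset Strict Implicit. Unset Printing Implicit Defensive.

(* Signed indices [+-n]: (i, true) stands for +(i+1), (i, false) for -(i+1). *)
Notation sidx n := ('I_n * bool)%type.
Definition sneg n (j : sidx n) : sidx n := (j.1, ~~ j.2).

Notation point n := ('I_n -> R).
Definition sval (b : bool) : R := if b then (Rinv 4)%R else (Ropp (Rinv 4))%R.

Definition cube n (x : point n) : Prop := forall i, (Rle (Ropp (Rinv 4)) (x i) /\ Rle (x i) (Rinv 4)).

Definition facet n (j : sidx n) (x : point n) : Prop :=
  cube x /\ x j.1 = sval j.2.

(* A (nonempty) face is encoded by a sign vector: s i = Some b fixes
   x_i = sval b, s i = None leaves coordinate i free. *)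
Notation fvec n := {ffun 'I_n -> option bool}.
Definition proper_fv n (s : fvec n) : Prop := exists i, s i <> None.
Definition face n (s : fvec n) (x : point n) : Prop :=
  cube x /\ forall i b, s i = Some b -> x i = sval b.

Definition subset n (A B : point n -> Prop) : Prop := forall x, A x -> B x.
Definition same n (A B : point n -> Prop) : Prop := forall x, A x <-> B x.
Definition inter n (A B : point n -> Prop) (x : point n) : Prop := A x /\ B x.
Definition img n (f : point n -> point n) (A : point n -> Prop) (y : point n) : Prop :=
  exists2 x, A x & y = f x.
Definition is_face n (A : point n -> Prop) : Prop :=
  exists2 t : fvec n, proper_fv t & same A (face t).

Definition dist2 n (x y : point n) : R :=
  \big[Rplus/R0]_(i < n) (pow (Rminus (x i) (y i)) 2).

(* Facets-pairing structure (omega, {tau_j}); tau_j is only relevant on F(j). *)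
Record facets_pairing n (om : sidx n -> sidx n)
    (tau : sidx n -> point n -> point n) : Prop := {
  fp_invol : forall j, om (om j) = j;
  fp_maps : forall j x, facet j x -> facet (om j) (tau j x);
  (* tau_{omega j} = tau_j^{-1} (with fp_invol, tau_j is a bijection F(j) -> F(omega j)) *)
  fp_inv : forall j x, facet j x -> tau (om j) (tau j x) = x;
  (* tau_j is continuous on F(j) (its inverse tau_{omega j} is too: homeomorphism) *)
  fp_cont : forall j x, facet j x -> forall eps, Rlt 0 eps ->
     exists2 delta, Rlt 0 delta &
       forall y, facet j y -> Rlt (dist2 x y) delta ->
                 Rlt (dist2 (tau j x) (tau j y)) eps;
  fp_face : forall j s, proper_fv s -> subset (face s) (facet j) ->
     is_face (img (tau j) (face s));
  fp_cycle : forall j k j' k', j.1 <> k.1 ->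
     k'.1 <> (om j).1 -> j'.1 <> (om k).1 ->
     same (img (tau j) (inter (facet j) (facet k)))
          (inter (facet (om j)) (facet k')) ->
     same (img (tau k) (inter (facet j) (facet k)))
          (inter (facet j') (facet (om k))) ->
     forall p, facet j p -> facet k p -> tau k' (tau j p) = tau j' (tau k p)
}.

Definition regular n (om : sidx n -> sidx n)
    (tau : sidx n -> point n -> point n) : Prop :=
  (forall j, om (sneg j) = sneg (om j)) /\
  (forall j x y, facet j x -> facet j y -> dist2 (tau j x) (tau j y) = dist2 x y).

(* tau_{k_m} o ... o tau_{k_1}, for ks = [:: k_1; ...; k_m]. *)
Fixpoint comp n (tau : sidx n -> point n -> point n) (ks : seq (sidx n))
    (x : point n) : point n :=
  match ks with [::] => x | k :: ks' => comp tau ks' (tau k x) end.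

Fixpoint valid n (tau : sidx n -> point n -> point n) (A : point n -> Prop)
    (ks : seq (sidx n)) : Prop :=
  match ks with
  | [::] => True
  | k :: ks' => subset A (facet k) /\ valid tau (img (tau k) A) ks'
  end.

Definition in_family n (tau : sidx n -> point n -> point n) (s t : fvec n) : Prop :=
  proper_fv t /\
  exists ks, valid tau (face s) ks /\ same (img (comp tau ks) (face s)) (face t).

(* One step of Psi^f_k, as a relation between facets (signed indices) j |-> j'. *)
Definition psi_step n (om : sidx n -> sidx n) (tau : sidx n -> point n -> point n)
    (k j j' : sidx n) : Prop :=
  if j == k then j' = om k
  else same (inter (facet j') (facet (om k)))
            (img (tau k) (inter (facet j) (facet k))).

Fixpoint psi_chain n (om : sidx n -> sidx n) (tau : sidx n -> point n -> point n)
    (ks : seq (sidx n)) (j j' : sidx n) : Prop :=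
  match ks with
  | [::] => j' = j
  | k :: ks' => exists2 m, psi_step om tau k j m & psi_chain om tau ks' m j'
  end.

Definition strong n (om : sidx n -> sidx n)
    (tau : sidx n -> point n -> point n) : Prop :=
  forall s : fvec n, proper_fv s -> forall ks1 ks2,
    valid tau (face s) ks1 -> valid tau (face s) ks2 ->
    same (img (comp tau ks1) (face s)) (img (comp tau ks2) (face s)) ->
    (forall x, face s x -> comp tau ks1 x = comp tau ks2 x) /\
    (forall j j1 j2, subset (face s) (facet j) ->
       psi_chain om tau ks1 j j1 -> psi_chain om tau ks2 j j2 -> j1 = j2).

(* Main.v *)
Require Import Defs.
From Stdlib Require Import Reals Lra ClassicalEpsilon.
From mathcomp Require Import all_boot.
Require Import Defs.
Set Implicit Arguments. Unset Strict Implicit. Unset Printing Implicit Defensive.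

Lemma sval_inj b1 b2 : sval b1 = sval b2 -> b1 = b2.
Proof. case: b1; case: b2 => //= H; exfalso; lra. Qed.
Lemma sval_n0 b : sval b <> R0.
Proof. case: b => /= H; lra. Qed.
Lemma sval_cube b : Rle (Ropp (Rinv 4)) (sval b) /\ Rle (sval b) (Rinv 4).
Proof. case: b => /=; lra. Qed.

Definition pt n (t : fvec n) : point n := fun i => match t i with Some b => sval b | None => R0 end.

Lemma pt_face n (t : fvec n) : face t (pt t).
Proof.
split.
- move=> i; rewrite /pt; case: (t i) => [b|]; [exact: sval_cube | lra].
- by move=> i b; rewrite /pt => ->.
Qed.

Lemma pt_val n (t : fvec n) i b : pt t i = sval b -> t i = Some b.
Proof. rewrite /pt; case: (t i) => [b'|] H; [by rewrite (sval_inj H) | by case: (sval_n0 (esym H))]. Qed.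

Lemma face_sub_fix n (t u : fvec n) i b : subset (face t) (face u) -> u i = Some b -> t i = Some b.
Proof. move=> H Hu; apply: pt_val; case: (H _ (pt_face t)) => _ H2; exact: H2. Qed.

Lemma face_same_eq n (t u : fvec n) : same (face t) (face u) -> t = u.
Proof.
move=> H; apply/ffunP => i.
have H1 : subset (face t) (face u) by move=> x /H.
have H2 : subset (face u) (face t) by move=> x /H.
case Ht: (t i) => [b|]; first by rewrite (face_sub_fix H2 Ht).
case Hu: (u i) => [b|] //; by rewrite (face_sub_fix H1 Hu) in Ht.
Qed.

Definition fv1 n (j : sidx n) : fvec n := [ffun i => if i == j.1 then Some j.2 else None].
Definition fv2 n (j k : sidx n) : fvec n :=
  [ffun i => if i == j.1 then Some j.2 else if i == k.1 then Some k.2 else None].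

Lemma facet_face n (j : sidx n) x : facet j x <-> face (fv1 j) x.
Proof.
split.
- case=> Hc Hx; split => // i b; rewrite ffunE; case: eqP => // -> [<-] //.
- case=> Hc Hx; split => //; apply: Hx; by rewrite ffunE eqxx.
Qed.

Lemma sub_facet n (t : fvec n) j : subset (face t) (facet j) <-> t j.1 = Some j.2.
Proof.
split.
- move=> H; apply: (@face_sub_fix _ t (fv1 j)); last by rewrite ffunE eqxx.
  by move=> x /H /facet_face.
- move=> Ht x [Hc Hx]; split => //; exact: Hx.
Qed.

Lemma facet_pt n (t : fvec n) j : facet j (pt t) <-> t j.1 = Some j.2.
Proof.
split.
- case=> _ H; exact: pt_val.
- move=> H; split; first by case: (pt_face t).
  by rewrite /pt H.
Qed.

Lemma facet_eq n (j k : sidx n) : subset (facet k) (facet j) -> j = k.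
Proof.
move=> H.
have : facet j (pt (fv1 k)) by apply: H; apply/facet_face; exact: pt_face.
move/facet_pt; rewrite ffunE; case: eqP => // E [E2].
clear H; move: E E2; case: j => a b; case: k => c d /= -> -> //.
Qed.

Lemma facet_diff n (j k : sidx n) x : facet j x -> facet k x -> j.1 = k.1 -> j = k.
Proof.
case=> _ Hj [_ Hk] E; rewrite -E Hj in Hk; have := sval_inj Hk.
by case: j k E {Hj Hk} => a b [c d] /= -> ->.
Qed.

Lemma inter2 n (j k : sidx n) : j.1 <> k.1 -> same (inter (facet j) (facet k)) (face (fv2 j k)).
Proof.
move=> Ne x; split.
- case=> [[Hc Hj] [_ Hk]]; split => // i b; rewrite ffunE.
  case: eqP => [->[<-]//|_]; case: eqP => [->[<-]//|_] //.
- case=> Hc Hx; split; split => //; apply: Hx; rewrite ffunE ?eqxx //.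
  case: eqP => // E; by case: Ne.
Qed.

Lemma fv2_fix n (j k : sidx n) i b : fv2 j k i = Some b -> (i, b) = j \/ (i, b) = k.
Proof.
rewrite ffunE; case: eqP => [-> [<-]|_]; first by left; case: (j).
case: eqP => // -> [<-]; right; by case: (k).
Qed.

Lemma fv2_proper n (j k : sidx n) : proper_fv (fv2 j k).
Proof. by exists j.1; rewrite ffunE eqxx. Qed.

Lemma img_same n (f : point n -> point n) A B : same A B -> same (img f A) (img f B).
Proof. move=> H y; split; case=> x Hx ->; exists x => //; exact/H. Qed.
Lemma img_sub n (f : point n -> point n) A B : subset A B -> subset (img f A) (img f B).
Proof. move=> H y; case=> x Hx ->; exists x => //; exact: H. Qed.
Lemma same_sym n (A B : point n -> Prop) : same A B -> same B A.
Proof. by move=> H x; split => /H. Qed.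
Lemma inter_C n (A B : point n -> Prop) : same (inter A B) (inter B A).
Proof. by move=> x; split; case. Qed.


Lemma finv2 n om tau (FP : @facets_pairing n om tau) j y :
  facet (om j) y -> tau j (tau (om j) y) = y.
Proof. move=> H; have := fp_inv FP H; by rewrite (fp_invol FP). Qed.

Lemma fmaps2 n om tau (FP : @facets_pairing n om tau) j y :
  facet (om j) y -> facet j (tau (om j) y).
Proof. move=> H; have := fp_maps FP H; by rewrite (fp_invol FP). Qed.

Lemma INJ n om tau (FP : @facets_pairing n om tau) j A B :
  subset A (facet j) -> subset B (facet j) ->
  subset (img (tau j) A) (img (tau j) B) -> subset A B.
Proof.
move=> HA HB H x Ax.
have [z Bz E] : img (tau j) B (tau j x) by apply: H; exists x.
by rewrite -(fp_inv FP (HA _ Ax)) E (fp_inv FP (HB _ Bz)).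
Qed.

Lemma TR n om tau (FP : @facets_pairing n om tau) k P Q :
  subset P (facet k) -> subset Q (facet (om k)) ->
  same P (img (tau (om k)) Q) -> same Q (img (tau k) P).
Proof.
move=> HP HQ H x; split.
- move=> Qx; exists (tau (om k) x); last by rewrite (finv2 FP (HQ _ Qx)).
  apply/H; by exists x.
- case=> p Pp ->; have [q Qq ->] := proj1 (H p) Pp.
  by rewrite (finv2 FP (HQ _ Qq)).
Qed.

Lemma G1 n om tau (FP : @facets_pairing n om tau) (j k : sidx n) : j.1 <> k.1 ->
  exists m, m.1 <> (om k).1 /\
    same (inter (facet m) (facet (om k))) (img (tau k) (inter (facet j) (facet k))).
Proof.
move=> Hjk.
set T := img (tau k) (inter (facet j) (facet k)).
have Fj := inter2 Hjk.
have subk : subset (face (fv2 j k)) (facet k) by move=> x /Fj [].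
have [u pu Hu] := fp_face FP (fv2_proper j k) subk.
have HT : same T (face u).
  move=> x; rewrite -Hu; exact: img_same.
have Tk : subset T (facet (om k)) by move=> x [y [_ Hy] ->]; exact: fp_maps.
have uok : u (om k).1 = Some (om k).2 by apply/sub_facet => x /HT; exact: Tk.
case: (pickP (fun i => (i != (om k).1) && (u i != None))) => [i /andP [/eqP Hi Hui]|Hno].
- case Eui : (u i) Hui => [b|] // _.
  exists (i, b); split => //.
  have Tm : subset T (facet (i, b)) by move=> x /HT; apply: (proj2 (sub_facet u (i, b))).
  move=> x; split; last by move=> Tx; split; [exact: Tm | exact: Tk].
  set B := inter (facet (i, b)) (facet (om k)).
  have HB := inter2 (Hi : (i, b).1 <> (om k).1).
  have subB : subset (face (fv2 (i, b) (om k))) (facet (om k)) by move=> y /HB [].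
  have [w pw Hw] := fp_face FP (fv2_proper (i, b) (om k)) subB.
  have HBw : same (img (tau (om k)) B) (face w).
    move=> y; rewrite -Hw; exact: img_same.
  have Hjkw : subset (face (fv2 j k)) (face w).
    move=> y /Fj Hy; apply/HBw; exists (tau k y); last by rewrite (fp_inv FP (proj2 Hy)).
    split; [apply: Tm | apply: Tk]; by exists y.
  move=> Bx.
  case Ewj : (w j.1) => [bj|].
  + have Ebj : bj = j.2.
      by move: (face_sub_fix Hjkw Ewj); rewrite ffunE eqxx => -[].
    subst bj.
    have Hwj : subset (face w) (facet j) by apply/sub_facet.
    have Hy : facet j (tau (om k) x) by apply: Hwj; apply/HBw; exists x.
    have Hy2 : facet k (tau (om k) x) by apply: (fmaps2 FP); case: Bx.
    exists (tau (om k) x); first by split.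
    by rewrite (finv2 FP (proj2 Bx)).
  + exfalso.
    have Hkw : subset (facet k) (img (tau (om k)) B).
      move=> y [Hc Hy]; apply/HBw; split => // i' b' Hw'.
      move: (face_sub_fix Hjkw Hw'); rewrite ffunE.
      case: eqP => [E|_]; first by rewrite E Ewj in Hw'.
      case: eqP => // -> [<-] //.
    have : subset (facet (om k)) B.
      apply: (@INJ n om tau FP (om k) (facet (om k)) B) => //; first by move=> y [].
      move=> y [z Hz ->]; apply: Hkw; exact: (fmaps2 FP Hz).
    move=> Hs; have := facet_eq (fun y Hy => proj1 (Hs y Hy)).
    by move=> E; apply: Hi; rewrite -E.
- exfalso.
  have Hs : subset (facet (om k)) T.
    move=> y [Hc Hy]; apply/HT; split => // i b Hui.
    have := Hno i; rewrite /= Hui andbT.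
    case: eqP => // E _; move: Hui; rewrite E uok => -[<-]; exact: Hy.
  have : subset (facet k) (inter (facet j) (facet k)).
    apply: (@INJ n om tau FP k (facet k) (inter (facet j) (facet k))) => //; first by move=> y [].
    move=> y [z Hz ->]; apply: Hs; exact: fp_maps.
  move=> Hs2; have := facet_eq (fun y Hy => proj1 (Hs2 y Hy)).
  by move=> E; apply: Hjk; rewrite E.
Qed.

Definition ne n (A : point n -> Prop) := exists x, A x.

Lemma NF n om tau (FP : @facets_pairing n om tau) (j k : sidx n) : j <> k ->
  ~ subset (facet (om k)) (img (tau k) (inter (facet j) (facet k))).
Proof.
move=> Ne Hs.
have : subset (facet k) (inter (facet j) (facet k)).
  apply: (@INJ n om tau FP k (facet k) (inter (facet j) (facet k))) => //; first by move=> y [].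
  move=> y [z Hz ->]; apply: Hs; exact: fp_maps.
move=> Hs2; have := facet_eq (fun y Hy => proj1 (Hs2 y Hy)); by move=> E; apply: Ne.
Qed.

Lemma step_nd n om tau (FP : @facets_pairing n om tau) (A : point n -> Prop) j k m :
  ne A -> subset A (facet j) -> subset A (facet k) -> j <> k ->
  psi_step om tau k j m -> m.1 <> (om k).1.
Proof.
move=> [x Ax] HAj HAk Ne; rewrite /psi_step; case: eqP => // _ H E.
have [Hm Hok] : inter (facet m) (facet (om k)) (tau k x).
  apply/H; exists x => //; split; [exact: HAj|exact: HAk].
have Em := facet_diff Hm Hok E; subst m.
apply: (NF FP Ne) => y Hy; apply/H; by split.
Qed.

Lemma step_sub n om tau (FP : @facets_pairing n om tau) (A : point n -> Prop) j k m :
  subset A (facet j) -> subset A (facet k) ->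
  psi_step om tau k j m -> subset (img (tau k) A) (facet m).
Proof.
move=> HAj HAk; rewrite /psi_step; case: eqP => [_ ->|_ H] y [x Ax ->].
- exact: (fp_maps FP (HAk _ Ax)).
- have : inter (facet m) (facet (om k)) (tau k x).
    apply/H; exists x => //; split; [exact: HAj|exact: HAk].
  by case.
Qed.

Lemma chain_sub n om tau (FP : @facets_pairing n om tau) ks :
  forall (A : point n -> Prop) j j', valid tau A ks -> subset A (facet j) ->
  psi_chain om tau ks j j' -> subset (img (comp tau ks) A) (facet j').
Proof.
elim: ks => [|k ks IH] A j j' /=.
- by move=> _ HA -> y [x Ax ->]; exact: HA.
- move=> [HAk Hv] HAj [m Hs Hc] y [x Ax ->].
  apply: (IH _ m j' Hv (step_sub FP HAj HAk Hs) Hc).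
  by exists (tau k x) => //; exists x.
Qed.

Lemma step_total n om tau (FP : @facets_pairing n om tau) (A : point n -> Prop) j k :
  ne A -> subset A (facet j) -> subset A (facet k) -> exists m, psi_step om tau k j m.
Proof.
move=> [x Ax] HAj HAk; rewrite /psi_step; case: eqP => [_|Ne]; first by exists (om k).
have Ne1 : j.1 <> k.1 by move=> E; apply: Ne; exact: (facet_diff (HAj _ Ax) (HAk _ Ax) E).
by have [m [_ Hm]] := G1 FP Ne1; exists m.
Qed.

Lemma img_ne n (f : point n -> point n) A : ne A -> ne (img f A).
Proof. by case=> x Ax; exists (f x); exists x. Qed.

Lemma chain_total n om tau (FP : @facets_pairing n om tau) ks :
  forall (A : point n -> Prop) j, ne A -> valid tau A ks -> subset A (facet j) ->
  exists j', psi_chain om tau ks j j'.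
Proof.
elim: ks => [|k ks IH] A j /= Hne.
- by move=> _ _; exists j.
- move=> [HAk Hv] HAj.
  have [m Hs] := step_total FP Hne HAj HAk.
  have [j' Hc] := IH _ m (img_ne _ Hne) Hv (step_sub FP HAj HAk Hs).
  by exists j'; exists m.
Qed.

Lemma step_inj n om tau (FP : @facets_pairing n om tau) (A : point n -> Prop) j1 j2 k m :
  ne A -> subset A (facet j1) -> subset A (facet j2) -> subset A (facet k) ->
  psi_step om tau k j1 m -> psi_step om tau k j2 m -> j1 = j2.
Proof.
move=> [x Ax] H1 H2 Hk; rewrite /psi_step.
have [E1|N1] := eqVneq j1 k; have [E2|N2] := eqVneq j2 k; try by rewrite E1 E2.
- move=> -> H; move/eqP: N2 => N2.
  exfalso; apply: (NF FP N2) => y Hy; apply/H; by split.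
- move=> H Em; subst m; move/eqP: N1 => N1.
  exfalso; apply: (NF FP N1) => y Hy; apply/H; by split.
- move=> Ha Hb; move/eqP: N1 => N1; move/eqP: N2 => N2.
  have S : forall a b, a <> k -> facet a x -> same (inter (facet m) (facet (om k))) (img (tau k) (inter (facet a) (facet k))) ->
     same (inter (facet m) (facet (om k))) (img (tau k) (inter (facet b) (facet k))) ->
     subset (inter (facet a) (facet k)) (inter (facet b) (facet k)).
    move=> a b _ _ Ha' Hb'.
    apply: (@INJ n om tau FP k) => //; try by move=> y [].
    by move=> y /Ha' /Hb'.
  have Ne1 : j1.1 <> k.1 by move=> E; apply: N1; exact: (facet_diff (H1 _ Ax) (Hk _ Ax) E).
  have Hp : inter (facet j1) (facet k) (pt (fv2 j1 k)) by apply/inter2 => //; exact: pt_face.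
  have [/facet_pt Hq _] := S j1 j2 N1 (H1 _ Ax) Ha Hb _ Hp.
  case: (fv2_fix Hq); last by move=> E; exfalso; apply: N2; rewrite -E; case: (j2).
  by move=> <-; case: (j2).
Qed.

Lemma step_surj n om tau (FP : @facets_pairing n om tau) (A : point n -> Prop) k m :
  ne A -> subset A (facet k) -> subset (img (tau k) A) (facet m) ->
  exists j, subset A (facet j) /\ psi_step om tau k j m.
Proof.
move=> [x Ax] HAk HAm.
have [Em|Nm] := eqVneq m (om k).
- by exists k; split => //; rewrite /psi_step eqxx.
- have Nm1 : m.1 <> (om k).1.
    move=> E; move/eqP: Nm; apply; apply: (facet_diff _ (fp_maps FP (HAk _ Ax)) E).
    by apply: HAm; exists x.
  have [j0 []] := G1 FP Nm1; rewrite (fp_invol FP) => Nj0 Hj0.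
  have Nj0' : j0 <> k by move=> E; apply: Nj0; rewrite E.
  exists j0; split.
  + move=> y Ay.
    have Hy : inter (facet m) (facet (om k)) (tau k y).
      split; [apply: HAm; by exists y | exact: (fp_maps FP (HAk _ Ay))].
    have : img (tau (om k)) (inter (facet m) (facet (om k))) y.
      by exists (tau k y) => //; rewrite (fp_inv FP (HAk _ Ay)).
    by move/Hj0 => [].
  + rewrite /psi_step; case: eqP => // _.
    apply: (TR FP); [by move=> y [] | by move=> y [] | exact: Hj0].
Qed.

Lemma chain_surj n om tau (FP : @facets_pairing n om tau) ks :
  forall (A : point n -> Prop) m', ne A -> valid tau A ks ->
  subset (img (comp tau ks) A) (facet m') ->
  exists j, subset A (facet j) /\ psi_chain om tau ks j m'.
Proof.
elim: ks => [|k ks IH] A m' Hne /=.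
- move=> _ H; exists m'; split => // x Ax; apply: H; by exists x.
- move=> [HAk Hv] H.
  have [m [Hm Hc]] : exists m, subset (img (tau k) A) (facet m) /\ psi_chain om tau ks m m'.
    apply: IH => //; first exact: img_ne.
    move=> y [z [x Ax ->] ->]; apply: H; by exists x.
  have [j [Hj Hs]] := step_surj FP Hne HAk Hm.
  by exists j; split => //; exists m.
Qed.

Fixpoint Rg (T : finType) (I : eqType) (f : I -> T -> T) (x : T) (L : seq I) : {set T} :=
  match L with [::] => [set x] | a :: L' => Rg f x L' :|: f a @: Rg f x L' end.

Lemma Rg_x (T : finType) (I : eqType) (f : I -> T -> T) x L : x \in Rg f x L.
Proof. elim: L => [|a L IH] /=; [by rewrite set11 | by rewrite inE IH]. Qed.

Lemma Rg_img (T : finType) (I : eqType) (f : I -> T -> T)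
  (fcomm : forall a b y, f a (f b y) = f b (f a y)) a L :
  forall x, f a @: Rg f x L = Rg f (f a x) L.
Proof.
elim: L => [|b L IH] x /=; first by rewrite imset_set1.
rewrite imsetU IH; congr (_ :|: _).
rewrite -!imset_comp -IH -imset_comp; apply: eq_imset => y /=; exact: fcomm.
Qed.

Lemma imK (T : finType) (g : T -> T) (ginv : forall y, g (g y) = y) (S : {set T}) :
  g @: (g @: S) = S.
Proof. by rewrite -imset_comp (eq_imset _ (fun y => ginv y)) imset_id. Qed.

Lemma Rg_mem (T : finType) (I : eqType) (f : I -> T -> T)
  (finv : forall a y, f a (f a y) = y)
  (fcomm : forall a b y, f a (f b y) = f b (f a y)) L :
  forall x y, y \in Rg f x L -> Rg f y L = Rg f x L.
Proof.
elim: L => [|a L IH] x y /=; first by rewrite inE => /eqP ->.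
rewrite inE => /orP [H|/imsetP [z Hz ->]]; first by rewrite (IH _ _ H).
rewrite -(Rg_img fcomm) (IH _ _ Hz) imK //; exact: setUC.
Qed.

Lemma Rg_closed (T : finType) (I : eqType) (f : I -> T -> T)
  (finv : forall a y, f a (f a y) = y)
  (fcomm : forall a b y, f a (f b y) = f b (f a y)) a L :
  a \in L -> forall x y, y \in Rg f x L -> f a y \in Rg f x L.
Proof.
elim: L => [|b L IH] //; rewrite in_cons => Ha x y /=.
rewrite !inE => /orP [H|/imsetP [z Hz ->]].
- case: eqP Ha => [->|_] /= Ha; first by rewrite imset_f ?orbT.
  by rewrite IH.
- case: eqP Ha => [->|_] /= Ha; first by rewrite finv Hz.
  by rewrite fcomm imset_f ?orbT // IH.
Qed.

Lemma Rg_card (T : finType) (I : eqType) (f : I -> T -> T)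
  (finv : forall a y, f a (f a y) = y)
  (fcomm : forall a b y, f a (f b y) = f b (f a y)) L x :
  exists e, #|Rg f x L| = 2 ^ e.
Proof.
elim: L => [|a L [e IH]] /=; first by exists 0; rewrite cards1.
have Hi : f a @: Rg f x L = Rg f (f a x) L by exact: Rg_img.
case: (set_0Vmem (Rg f x L :&: f a @: Rg f x L)) => [H0|[z]].
- exists e.+1.
  have := cardsUI (Rg f x L) (f a @: Rg f x L).
  rewrite H0 cards0 addn0 card_imset; last exact: (can_inj (finv a)).
  by move=> ->; rewrite IH expnS mul2n addnn.
- rewrite inE => /andP [H1 H2].
  rewrite Hi in H2.
  have E1 := Rg_mem finv fcomm H1; have E2 := Rg_mem finv fcomm H2.
  exists e; rewrite Hi -E2 E1 setUid //.
Qed.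

Lemma same_trans n (A B C : point n -> Prop) : same A B -> same B C -> same A C.
Proof. by move=> H1 H2 x; rewrite H1 H2. Qed.

Lemma comp_rcons n (tau : sidx n -> point n -> point n) ks k x :
  comp tau (rcons ks k) x = tau k (comp tau ks x).
Proof. by elim: ks x => [|k0 ks IH] x //=. Qed.

Lemma img_comp_rcons n (tau : sidx n -> point n -> point n) ks k A :
  same (img (comp tau (rcons ks k)) A) (img (tau k) (img (comp tau ks) A)).
Proof.
move=> y; split.
- case=> x Ax ->; rewrite comp_rcons; exists (comp tau ks x) => //; by exists x.
- case=> z [x Ax ->] ->; exists x => //; by rewrite comp_rcons.
Qed.

Lemma img_comp_cons n (tau : sidx n -> point n -> point n) ks k A :
  same (img (comp tau (k :: ks)) A) (img (comp tau ks) (img (tau k) A)).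
Proof.
move=> y; split.
- case=> x Ax -> /=; exists (tau k x) => //; by exists x.
- case=> z [x Ax ->] ->; by exists x.
Qed.

Lemma valid_same n (tau : sidx n -> point n -> point n) ks :
  forall A B, same A B -> valid tau A ks -> valid tau B ks.
Proof.
elim: ks => [|k ks IH] A B H //= [H1 H2]; split.
- by move=> x /H /H1.
- apply: (IH (img (tau k) A)) => //; exact: img_same.
Qed.

Lemma valid_rcons n (tau : sidx n -> point n -> point n) ks k :
  forall A, valid tau A (rcons ks k) <-> valid tau A ks /\ subset (img (comp tau ks) A) (facet k).
Proof.
elim: ks => [|k0 ks IH] A /=.
- split; first by case=> H _; split => // y [x Ax ->]; exact: H.
  by case=> _ H; split => // x Ax; apply: H; exists x.
- rewrite IH; split.
  + case=> H1 [H2 H3]; split => // y /img_comp_cons; exact: H3.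
  + case=> [[H1 H2] H3]; split => //; split => // y /img_comp_cons; exact: H3.
Qed.

Lemma chain_rcons n om (tau : sidx n -> point n -> point n) ks k :
  forall j m j', psi_chain om tau ks j m -> psi_step om tau k m j' ->
  psi_chain om tau (rcons ks k) j j'.
Proof.
elim: ks => [|k0 ks IH] j m j' /=; first by move=> -> H; exists j'.
case=> m0 H1 H2 H3; exists m0 => //; exact: IH H2 H3.
Qed.

Lemma valid_face n om tau (FP : @facets_pairing n om tau) ks :
  forall s : fvec n, proper_fv s -> valid tau (face s) ks ->
  exists t, proper_fv t /\ same (img (comp tau ks) (face s)) (face t).
Proof.
elim: ks => [|k ks IH] s ps /=.
- move=> _; exists s; split => // y; split; [by case=> x Hx -> | by move=> H; exists y].
- move=> [H1 H2].
  have [u pu Hu] := fp_face FP ps H1.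
  have [t [pt Ht]] := IH u pu (valid_same Hu H2).
  exists t; split => //.
  apply: same_trans (img_comp_cons _ _ _ _) _.
  apply: same_trans Ht; exact: img_same.
Qed.

Definition Rel n om (tau : sidx n -> point n -> point n) (s : fvec n) (a : sidx n) (t t' : fvec n) : Prop :=
  in_family tau s t /\ subset (face s) (facet a) /\ proper_fv t' /\
  exists ks k, [/\ valid tau (face s) ks, same (img (comp tau ks) (face s)) (face t),
     psi_chain om tau ks a k & same (img (tau k) (face t)) (face t')].

Definition sg n om (tau : sidx n -> point n -> point n) (s : fvec n) (a : sidx n) (t : fvec n) : fvec n :=
  match excluded_middle_informative (exists t', Rel om tau s a t t') with
  | left H => proj1_sig (constructive_indefinite_description _ H)
  | right _ => t end.

Lemma Rel_uniq n om tau (ST : @strong n om tau) s (ps : proper_fv s) a t t1 t2 :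
  Rel om tau s a t t1 -> Rel om tau s a t t2 -> t1 = t2.
Proof.
move=> [_ [Ha [_ [ks1 [k1 [v1 H1 c1 E1]]]]]] [_ [_ [_ [ks2 [k2 [v2 H2 c2 E2]]]]]].
have [_ Hb] := ST s ps ks1 ks2 v1 v2 (same_trans H1 (same_sym H2)).
have Ek := Hb a k1 k2 Ha c1 c2; subst k2.
apply: face_same_eq; exact: same_trans (same_sym E1) E2.
Qed.

Lemma sg_Rel n om tau (ST : @strong n om tau) s (ps : proper_fv s) a t t' :
  Rel om tau s a t t' -> sg om tau s a t = t'.
Proof.
move=> H; rewrite /sg; case: excluded_middle_informative => [H'|H']; last by case: H'; exists t'.
apply: (Rel_uniq ST ps _ H); exact: proj2_sig.
Qed.

Lemma sg_none n om tau s a (t : fvec n) :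
  ~ (exists t', Rel om tau s a t t') -> sg om tau s a t = t.
Proof. by move=> H; rewrite /sg; case: excluded_middle_informative. Qed.

Lemma Rel_mk n om tau (FP : @facets_pairing n om tau) s (ps : proper_fv s) ks t a k :
  valid tau (face s) ks -> same (img (comp tau ks) (face s)) (face t) -> proper_fv t ->
  subset (face s) (facet a) -> psi_chain om tau ks a k ->
  exists t', [/\ Rel om tau s a t t', same (img (tau k) (face t)) (face t'),
     valid tau (face s) (rcons ks k), same (img (comp tau (rcons ks k)) (face s)) (face t')
     & proper_fv t'].
Proof.
move=> v Ht pt Ha c.
have Htk : subset (face t) (facet k).
  move=> x /Ht; exact: (chain_sub FP v Ha c).
have [u pu Hu] := fp_face FP pt Htk.
exists u; split => //.
- split; first by split => //; exists ks.
  split => //; split => //; by exists ks, k.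
- by apply/valid_rcons; split => // x /Ht /Htk.
- apply: same_trans (img_comp_rcons _ _ _ _) _.
  apply: same_trans Hu; exact: img_same.
Qed.

Lemma Rel_back n om tau (FP : @facets_pairing n om tau) s (ps : proper_fv s) a t t' :
  Rel om tau s a t t' -> Rel om tau s a t' t.
Proof.
move=> [[ptt _] [Ha [pt' [ks [k [v Ht c Ht']]]]]].
have Htk : subset (face t) (facet k).
  move=> x /Ht; exact: (chain_sub FP v Ha c).
have v' : valid tau (face s) (rcons ks k) by apply/valid_rcons; split => // x /Ht /Htk.
have Ht2 : same (img (comp tau (rcons ks k)) (face s)) (face t').
  apply: same_trans (img_comp_rcons _ _ _ _) _.
  apply: same_trans Ht'; exact: img_same.
split; first by split => //; exists (rcons ks k).
split => //; split => //; exists (rcons ks k), (om k); split => //.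
- by apply: chain_rcons c _; rewrite /psi_step eqxx.
- move=> y; split.
  + case=> z /Ht' [w Hw ->] ->; by rewrite (fp_inv FP (Htk _ Hw)).
  + move=> Hy; exists (tau k y); last by rewrite (fp_inv FP (Htk _ Hy)).
    apply/Ht'; by exists y.
Qed.

Lemma Rel_fam n om tau s a (t t' : fvec n) : Rel om tau s a t t' -> in_family tau s t.
Proof. by case. Qed.

Lemma sg_invol n om tau (FP : @facets_pairing n om tau) (ST : strong om tau) s (ps : proper_fv s) a t :
  sg om tau s a (sg om tau s a t) = t.
Proof.
case: (classic (exists t', Rel om tau s a t t')) => [[t' H]|H].
- rewrite (sg_Rel ST ps H); apply: (sg_Rel ST ps); exact: Rel_back.
- by rewrite !(sg_none H).
Qed.

Lemma sg_fam n om tau (FP : @facets_pairing n om tau) (ST : strong om tau) s (ps : proper_fv s) a t :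
  in_family tau s t -> in_family tau s (sg om tau s a t).
Proof.
case: (classic (exists t', Rel om tau s a t t')) => [[t' H]|H].
- rewrite (sg_Rel ST ps H) => _; exact: (Rel_fam (Rel_back FP ps H)).
- by rewrite (sg_none H).
Qed.

Lemma chain_inj n om tau (FP : @facets_pairing n om tau) ks :
  forall (A : point n -> Prop) j1 j2 m, ne A -> valid tau A ks ->
  subset A (facet j1) -> subset A (facet j2) ->
  psi_chain om tau ks j1 m -> psi_chain om tau ks j2 m -> j1 = j2.
Proof.
elim: ks => [|k ks IH] A j1 j2 m Hne /=; first by move=> _ _ _ -> ->.
move=> [HAk Hv] H1 H2 [m1 s1 c1] [m2 s2 c2].
have Em : m1 = m2.
  apply: (IH _ _ _ m (img_ne _ Hne) Hv (step_sub FP H1 HAk s1) (step_sub FP H2 HAk s2) c1 c2).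
subst m2; exact: (step_inj FP Hne H1 H2 HAk s1 s2).
Qed.

Lemma sg_comm n om tau (FP : @facets_pairing n om tau) (ST : strong om tau) s (ps : proper_fv s) a b t :
  sg om tau s a (sg om tau s b t) = sg om tau s b (sg om tau s a t).
Proof.
have noRel : forall c u, ~ in_family tau s u -> sg om tau s c u = u.
  move=> c u Hu; apply: sg_none => -[u' H]; apply: Hu; exact: Rel_fam H.
have noRel2 : forall c u, ~ subset (face s) (facet c) -> sg om tau s c u = u.
  move=> c u Hu; apply: sg_none => -[u' [_ [H _]]]; exact: Hu.
case: (classic (in_family tau s t)) => [Hfam|Hf]; last by rewrite !(noRel _ _ Hf).
case: (classic (subset (face s) (facet a))) => [Ha|Ha]; last by rewrite !(noRel2 _ _ Ha).
case: (classic (subset (face s) (facet b))) => [Hb|Hb]; last by rewrite !(noRel2 _ _ Hb).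
have [->|Nab] := eqVneq a b; first by [].
have [ptt [ks [v Ht]]] := Hfam.
have ne_s : ne (face s) by exists (pt s); exact: pt_face.
have ne_t : ne (face t) by exists (pt t); exact: pt_face.
have [j cj] := chain_total FP ne_s v Ha.
have [k ck] := chain_total FP ne_s v Hb.
have Htj : subset (face t) (facet j) by move=> x /Ht; exact: (chain_sub FP v Ha cj).
have Htk : subset (face t) (facet k) by move=> x /Ht; exact: (chain_sub FP v Hb ck).
have Njk : j <> k.
  move=> E; subst k; move/eqP: Nab; apply; exact: (chain_inj FP ne_s v Ha Hb cj ck).
have Njk1 : j.1 <> k.1.
  move=> E; apply: Njk; apply: (facet_diff (Htj _ (pt_face t)) (Htk _ (pt_face t)) E).
have [ta [Ra Ea va Hta pta]] := Rel_mk FP ps v Ht ptt Ha cj.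
have [tb [Rb Eb vb Htb ptb]] := Rel_mk FP ps v Ht ptt Hb ck.
have [k' sk'] := step_total FP ne_t Htk Htj.
have [j' sj'] := step_total FP ne_t Htj Htk.
have [tab [Rab Eab _ _ _]] := Rel_mk FP ps va Hta pta Hb (chain_rcons ck sk').
have [tba [Rba Eba _ _ _]] := Rel_mk FP ps vb Htb ptb Ha (chain_rcons cj sj').
rewrite (sg_Rel ST ps Rb) (sg_Rel ST ps Ra) (sg_Rel ST ps Rba) (sg_Rel ST ps Rab).
have nd1 : k'.1 <> (om j).1.
  apply: (step_nd FP ne_t Htk Htj _ sk'); by move=> E; apply: Njk.
have nd2 : j'.1 <> (om k).1 by exact: (step_nd FP ne_t Htj Htk Njk sj').
move: sk' sj'; rewrite /psi_step.
case: eqP => [E|_]; first by case: Njk.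
case: eqP => [E|_]; first by case: Njk.
move=> sk' sj'.
have S1 : same (img (tau j) (inter (facet j) (facet k))) (inter (facet (om j)) (facet k')).
  apply: same_trans (img_same _ (inter_C _ _)) _.
  apply: same_trans (same_sym sk') _; exact: inter_C.
have S2 := same_sym sj'.
have Hcyc := fp_cycle FP Njk1 nd1 nd2 S1 S2.
apply: face_same_eq => x; split.
- move/Eba => [y /Eb [p Hp ->] ->].
  rewrite -(Hcyc p (Htj _ Hp) (Htk _ Hp)).
  apply/Eab; exists (tau j p) => //; apply/Ea; by exists p.
- move/Eab => [y /Ea [p Hp ->] ->].
  rewrite (Hcyc p (Htj _ Hp) (Htk _ Hp)).
  apply/Eba; exists (tau k p) => //; apply/Eb; by exists p.
Qed.

Theorem mainTheorem6 (n : nat) (om : sidx n -> sidx n)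
    (tau : sidx n -> point n -> point n) :
  facets_pairing om tau -> regular om tau -> strong om tau ->
  forall s : fvec n, proper_fv s ->
  exists (A : {set fvec n}) (e : nat),
    (forall t, t \in A <-> in_family tau s t) /\ #|A| = 2 ^ e.
Proof.
move=> FP _ ST s ps.
set f := sg om tau s.
set J := [seq j <- enum (@predT (sidx n)) | s j.1 == Some j.2].
have finv : forall a y, f a (f a y) = y by move=> a y; exact: (sg_invol FP ST ps).
have fcomm : forall a b y, f a (f b y) = f b (f a y) by move=> a b y; exact: (sg_comm FP ST ps).
have [e He] := Rg_card finv fcomm J s.
have ne_s : ne (face s) by exists (pt s); exact: pt_face.
have fam_s : in_family tau s s.
  split => //; exists [::]; split => // y; split; [by case=> x Hx -> | by move=> H; exists y].
exists (Rg f s J), e; split => // t; split.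
- have sub : forall L t, t \in Rg f s L -> in_family tau s t.
    elim=> [|a L IH] u /=; first by rewrite inE => /eqP ->.
    rewrite inE => /orP [/IH //|/imsetP [z Hz ->]].
    apply: (sg_fam FP ST ps); exact: IH.
  exact: sub.
- move=> [pt0 [ks [v Ht]]].
  elim/last_ind: ks t v Ht {pt0} => [|ks k IH] t v Ht.
  + have -> : t = s; last exact: Rg_x.
    apply: face_same_eq => x; rewrite -Ht; split; [by case=> y Hy -> | by move=> H; exists x].
  + move/valid_rcons: v => [v0 Hk].
    have [t0 [pt0 Ht0]] := valid_face FP ps v0.
    have R0 := IH t0 v0 Ht0.
    have [a [Ha ca]] := chain_surj FP ne_s v0 Hk.
    have [t' [Ra Ea _ _ _]] := Rel_mk FP ps v0 Ht0 pt0 Ha ca.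
    have -> : t = f a t0.
      rewrite /f (sg_Rel ST ps Ra); apply: face_same_eq.
      apply: same_trans (same_sym Ht) _.
      apply: same_trans (img_comp_rcons _ _ _ _) _.
      apply: same_trans (img_same _ Ht0) Ea.
    apply: (Rg_closed finv fcomm) => //.
    rewrite mem_filter mem_enum andbT; apply/eqP; exact/sub_facet.
Qed.
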